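(* For all metric balls $\Theta$ in $\mathbb S^1_\omega$ and $\mathcal D'$ in $K_\omega$ with radius less than $1$, the family $(P^-_\Theta A_nU^+_{\mathcal D'})_{n\in\mathbb N}$ is $0$-Lipschitz well-rounded with respect to $(\mathcal V_\epsilon)_{\epsilon>0}$; that is, there exist $\epsilon_0>0$ and $n_0\in\mathbb N$ such that for all $\epsilon\in\,]0,\epsilon_0[$ and $n\ge n_0$, $\mu_G\big((P^-_\Theta A_nU^+_{\mathcal D'})^{+\epsilon}\big)\le\mu_G\big((P^-_\Theta A_nU^+_{\mathcal D'})^{-\epsilon}\big)$.
   Context: $K_\omega$ is the completion of a global function field over $\mathbb F_q$ at a normalized discrete valuation $\omega$; $\mathcal O_\omega$ is its valuation ring, $\pi_\omega$ a fixed uniformizer, $q_\omega$ the order of the residue field, $|x|_\omega=q_\omega^{-\omega(x)}$. $K_\omega^2$ carries the supremum norm $\|(x,y)\|_\omega=\max\{|x|_\omega,|y|_\omega\}$ and $\mathbb S^1_\omega$ is its unit sphere; balls are for the induced ultrametric. $G=\mathrm{SL}_2(K_\omega)$ with Haar measure $\mu_G$. $P^-$ is the lower triangular subgroup, $P^-(\mathcal O_\omega)=P^-\cap\mathcal M_2(\mathcal O_\omega)$; $P^-_\Theta$ is the set of elements of $P^-(\mathcal O_\omega)$ whose first column lies in $\Theta$; $A_n=\{\mathrm{diag}(\pi_\omega^{-n},\pi_\omega^n)\}$; $U^+_{\mathcal D'}=\{\begin{pmatrix}1&\gamma\\0&1\end{pmatrix}:\gamma\in\mathcal D'\}$. For $\epsilon>0$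 let $N_\epsilon=\lfloor-\log_{q_\omega}\epsilon\rfloor$, and let $\mathcal V_\epsilon=\mathrm{SL}_2(\mathcal O_\omega)$ if $\epsilon>1/q_\omega$, and otherwise $\mathcal V_\epsilon=\ker(\mathrm{SL}_2(\mathcal O_\omega)\to\mathrm{SL}_2(\mathcal O_\omega/\pi_\omega^{N_\epsilon}\mathcal O_\omega))$. For $\mathcal B\subset G$: $\mathcal B^{+\epsilon}=\mathcal V_\epsilon\mathcal B\mathcal V_\epsilon=\bigcup_{g,h\in\mathcal V_\epsilon}g\mathcal Bh$ and $\mathcal B^{-\epsilon}=\bigcap_{g,h\in\mathcal V_\epsilon}g\mathcal Bh$. *)

(* Defs.v *)
From HB Require Import structures.
From mathcomp Require Import all_boot all_order all_algebra.
From mathcomp Require Import all_classical all_reals all_analysis.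

Set Implicit Arguments.
Unset Strict Implicit.
Unset Printing Implicit Defensive.

Import Order.TTheory GRing.Theory Num.Theory.
Local Open Scope classical_set_scope.
Local Open Scope ring_scope.

(* K is a field, v : K -> int the normalized discrete valuation (its value   *)
(* at 0 is irrelevant and never used: v 0 stands for +oo), pi a uniformizer, *)
(* q = q_omega the order of the residue field.                               *)

(* x belongs to pi^N O, i.e. omega(x) >= N (with omega(0) = +oo). *)
Definition vge (K : fieldType) (v : K -> int) (N : int) (x : K) : Prop :=
  x = 0 \/ N <= v x.

(* K is the completion of a global function field at a place with normalized
   valuation v, uniformizer pi and residue field of order q; equivalently
   (classification of local fields) K is a field of positive characteristic,
   complete for a normalized discrete valuation v with finite residue field
   of order q. *)
Definition is_local_function_field (K : fieldType) (v : K -> int) (q : nat)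
    (pi : K) : Prop :=
      (exists p : nat, prime p /\ (p%:R : K) = 0) /\
  [/\
      (forall x y : K, x != 0 -> y != 0 -> v (x * y) = v x + v y),
      (forall x y : K, x != 0 -> y != 0 -> x + y != 0 ->
         Num.min (v x) (v y) <= v (x + y)),
      (pi != 0 /\ v pi = 1),
      (* the residue field O / pi O is finite of order q *)
      (exists s : seq K, [/\ size s = q, uniq s,
          (forall a, a \in s -> vge v 0 a),
          (forall a b, a \in s -> b \in s -> a != b -> ~ vge v 1 (a - b)) &
          (forall x, vge v 0 x -> exists2 a, a \in s & vge v 1 (x - a))]) &
      (forall u : nat -> K,
         (forall N : int, exists M : nat, forall m n : nat,
             (M <= m)%N -> (M <= n)%N -> vge v N (u m - u n)) ->
         exists l : K, forall N : int, exists M : nat, forall n : nat,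
             (M <= n)%N -> vge v N (u n - l))].

Definition absv (R : realType) (K : fieldType) (v : K -> int) (q : nat)
    (x : K) : R :=
  if x == 0 then 0 else (q%:R : R) ^ (- v x).

Definition norm2 (R : realType) (K : fieldType) (v : K -> int) (q : nat)
    (w : K * K) : R :=
  Num.max (absv R v q w.1) (absv R v q w.2).

Definition ballS1 (R : realType) (K : fieldType) (v : K -> int) (q : nat)
    (c : K * K) (r : R) : set (K * K) :=
  [set w | norm2 R v q w = 1 /\ norm2 R v q (w.1 - c.1, w.2 - c.2) <= r].

Definition ballK (R : realType) (K : fieldType) (v : K -> int) (q : nat)
    (d : K) (r : R) : set K :=
  [set x | absv R v q (x - d) <= r].

Definition SL2 (K : fieldType) := {M : 'M[K]_2 | \det M == 1}.
HB.instance Definition _ (K : fieldType) :=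
  Choice.copy (SL2 K) {M : 'M[K]_2 | \det M == 1}.

Lemma SL2_one_proof (K : fieldType) : \det (1%:M : 'M[K]_2) == 1.
Proof. by rewrite det1. Qed.

Definition SL2_one (K : fieldType) : SL2 K := exist _ 1%:M (SL2_one_proof K).

HB.instance Definition _ (K : fieldType) := isPointed.Build (SL2 K) (SL2_one K).

Definition mx2 (K : fieldType) (a b c d : K) : 'M[K]_2 :=
  \matrix_(i < 2, j < 2)
    if (i == 0 :> nat) then (if (j == 0 :> nat) then a else b)
    else (if (j == 0 :> nat) then c else d).

Definition i0 : 'I_2 := ord0.
Definition i1 : 'I_2 := ord_max.

Definition setmul (K : fieldType) (X Y : set (SL2 K)) : set (SL2 K) :=
  [set g | exists x y, [/\ X x, Y y & val g = val x *m val y]].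

Definition ltrans (K : fieldType) (g : SL2 K) (A : set (SL2 K)) : set (SL2 K) :=
  [set h | exists2 a, A a & val h = val g *m val a].

Definition distG (R : realType) (K : fieldType) (v : K -> int) (q : nat)
    (g h : SL2 K) : R :=
  \big[Num.max/0]_(i < 2) \big[Num.max/0]_(j < 2)
     absv R v q (val g i j - val h i j).

Definition openG (R : realType) (K : fieldType) (v : K -> int) (q : nat) :
    set (set (SL2 K)) :=
  [set U | forall g, U g -> exists2 r : R, 0 < r &
             forall h, distG R v q g h < r -> U h].

Definition compactG (R : realType) (K : fieldType) (v : K -> int) (q : nat)
    (A : set (SL2 K)) : Prop :=
  forall (I : Type) (F : I -> set (SL2 K)),
    (forall i, openG R v q (F i)) -> A `<=` \bigcup_i F i ->
    exists2 J : set I, finite_set J & A `<=` \bigcup_(i in J) F i.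

Definition GBorel (R : realType) (K : fieldType) (v : K -> int) (q : nat) :=
  g_sigma_algebraType (openG R v q).

Definition is_haar_measure (R : realType) (K : fieldType) (v : K -> int)
    (q : nat) (mu : {measure set (GBorel R v q) -> \bar R}) : Prop :=
  [/\ (forall (g : SL2 K) (A : set (GBorel R v q)),
          measurable A -> mu (ltrans g A) = mu A),
      (forall A : set (GBorel R v q), compactG R v q A -> (mu A < +oo)%E) &
      (forall U : set (GBorel R v q), openG R v q U -> U !=set0 ->
          (0 < mu U)%E)].

Definition integralG (K : fieldType) (v : K -> int) (g : SL2 K) : Prop :=
  forall i j, vge v 0 (val g i j).

Definition PTheta (K : fieldType) (v : K -> int) (Theta : set (K * K)) :
    set (SL2 K) :=
  [set g | [/\ integralG v g, val g i0 i1 = 0 & Theta (val g i0 i0, val g i1 i0)]].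

Definition Aset (K : fieldType) (pi : K) (n : nat) : set (SL2 K) :=
  [set g | val g = mx2 (pi ^- n) 0 0 (pi ^+ n)].

Definition Uset (K : fieldType) (D : set K) : set (SL2 K) :=
  [set g | exists2 gamma, D gamma & val g = mx2 1 gamma 0 1].

Definition Neps (R : realType) (q : nat) (eps : R) : int :=
  Num.floor (- (ln eps / ln (q%:R : R))).

Definition Veps (R : realType) (K : fieldType) (v : K -> int) (q : nat)
    (eps : R) : set (SL2 K) :=
  [set g | integralG v g /\
     (eps <= (q%:R : R)^-1 ->
        forall i j, vge v (Neps q eps) (val g i j - (1%:M : 'M[K]_2) i j))].

Definition plus_eps (R : realType) (K : fieldType) (v : K -> int) (q : nat)
    (eps : R) (B : set (SL2 K)) : set (SL2 K) :=
  setmul (setmul (Veps v q eps) B) (Veps v q eps).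

Definition minus_eps (R : realType) (K : fieldType) (v : K -> int) (q : nat)
    (eps : R) (B : set (SL2 K)) : set (SL2 K) :=
  [set x | forall g h, Veps v q eps g -> Veps v q eps h ->
     exists2 b, B b & val x = val g *m val b *m val h].

(* Main.v *)
Require Import Defs.
From HB Require Import structures.
From mathcomp Require Import all_boot all_order all_algebra.
From mathcomp Require Import all_classical all_reals all_analysis.
From mathcomp Require Import ring lra zify.
Import Order.TTheory GRing.Theory Num.Theory.
Set Implicit Arguments. Unset Strict Implicit. Unset Printing Implicit Defensive.
Local Open Scope classical_set_scope.
Local Open Scope ring_scope.

Section MX.
Variable K : fieldType.
Lemma mx2E00 (a b c d : K) : mx2 a b c d i0 i0 = a. Proof. by rewrite mxE. Qed.
Lemma mx2E01 (a b c d : K) : mx2 a b c d i0 i1 = b. Proof. by rewrite mxE. Qed.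
Lemma mx2E10 (a b c d : K) : mx2 a b c d i1 i0 = c. Proof. by rewrite mxE. Qed.
Lemma mx2E11 (a b c d : K) : mx2 a b c d i1 i1 = d. Proof. by rewrite mxE. Qed.
Lemma mx2_eta (M : 'M[K]_2) : M = mx2 (M i0 i0) (M i0 i1) (M i1 i0) (M i1 i1).
Proof.
apply/matrixP => i j; rewrite mxE.
case: i => [[|[|i]] Hi] //; case: j => [[|[|j]] Hj] //=;
  by congr (M _ _); apply: val_inj.
Qed.
Lemma mx2_mul (a b c d a' b' c' d' : K) :
  mx2 a b c d *m mx2 a' b' c' d' =
  mx2 (a * a' + b * c') (a * b' + b * d') (c * a' + d * c') (c * b' + d * d').
Proof.
apply/matrixP => i j; rewrite !mxE !big_ord_recl big_ord0 !mxE /=.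
by case: i => [[|[|i]] Hi] //; case: j => [[|[|j]] Hj] //=; rewrite addr0.
Qed.
Lemma mx2_det (a b c d : K) : \det (mx2 a b c d) = a * d - b * c.
Proof.
rewrite (expand_det_row _ ord0) !big_ord_recl big_ord0 /cofactor !det_mx11 !mxE /=.
rewrite addr0 /bump /=. simpl. ring.
Qed.
Lemma mx2_one : (1%:M : 'M[K]_2) = mx2 1 0 0 1.
Proof.
apply/matrixP => i j; rewrite !mxE.
by case: i => [[|[|i]] Hi] //; case: j => [[|[|j]] Hj] //=.
Qed.
End MX.

Section Val.
Variables (K : fieldType) (v : K -> int).
Hypothesis hmul : forall {x y : K}, x != 0 -> y != 0 -> v (x * y) = v x + v y.
Hypothesis hult : forall {x y : K}, x != 0 -> y != 0 -> x + y != 0 ->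
         Num.min (v x) (v y) <= v (x + y).

Lemma v1 : v 1 = 0.
Proof. have := hmul (oner_neq0 K) (oner_neq0 K); rewrite mulr1 => H.
have : v 1 - v 1 = v 1 + v 1 - v 1 by rewrite -H. by rewrite addrK subrr. Qed.

Lemma vN1 : v (-1) = 0.
Proof. have h : (-1 : K) != 0 by rewrite oppr_eq0 oner_neq0.
have := hmul h h; rewrite mulrNN mulr1 v1 => H.
have : v (-1) *+ 2 == 0 by rewrite mulr2n -H.
by rewrite mulrn_eq0 /= => /eqP. Qed.

Lemma vge_mono N M x : vge v N x -> M <= N -> vge v M x.
Proof. by case=> [->|h] hM; [left|right; apply: le_trans h]. Qed.

Lemma vge0 N : vge v N 0. Proof. by left. Qed.

Lemma vge_mul N M x y : vge v N x -> vge v M y -> vge v (N + M) (x * y).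
Proof.
case=> [->|hx]; first by rewrite mul0r; left.
case=> [->|hy]; first by rewrite mulr0; left.
have [->|x0] := eqVneq x 0; first by rewrite mul0r; left.
have [->|y0] := eqVneq y 0; first by rewrite mulr0; left.
by right; rewrite hmul // lerD.
Qed.

Lemma vge_add N x y : vge v N x -> vge v N y -> vge v N (x + y).
Proof.
case=> [->|hx]; first by rewrite add0r.
case=> [->|hy]; first by rewrite addr0; right.
have [->|x0] := eqVneq x 0; first by rewrite add0r; right.
have [->|y0] := eqVneq y 0; first by rewrite addr0; right.
have [->|s0] := eqVneq (x + y) 0; first by left.
right; apply: le_trans (hult x0 y0 s0); by rewrite le_min hx hy.
Qed.

Lemma vge_opp N x : vge v N x -> vge v N (- x).
Proof.
move=> h; have h1 : vge v 0 (-1) by right; rewrite vN1.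
by have := vge_mul h1 h; rewrite add0r mulN1r.
Qed.

Lemma vge_sub N x y : vge v N x -> vge v N y -> vge v N (x - y).
Proof. by move=> hx hy; apply: vge_add hx (vge_opp hy). Qed.

Lemma vge_1 : vge v 0 1. Proof. by right; rewrite v1. Qed.

Definition isunit (x : K) := x != 0 /\ v x = 0.

Lemma unit_vge x : isunit x -> vge v 0 x. Proof. by case=> _ h; right; rewrite h. Qed.

Lemma unit_inv x : isunit x -> isunit x^-1.
Proof. case=> x0 h; have xi0 : x^-1 != 0 by rewrite invr_eq0.
split=> //; have := hmul x0 xi0; rewrite mulfV // v1 h add0r. by move<-. Qed.

Lemma unit_mul x y : isunit x -> isunit y -> isunit (x * y).
Proof. case=> x0 hx [y0 hy]; split; first by rewrite mulf_neq0.
by rewrite hmul // hx hy. Qed.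

Lemma unit_of_prod x y : vge v 0 x -> vge v 0 y -> x * y = 1 -> isunit x.
Proof.
move=> hx hy hxy.
have x0 : x != 0 by apply/eqP => x0; move: hxy; rewrite x0 mul0r => /eqP; rewrite eq_sym oner_eq0.
have y0 : y != 0 by apply/eqP => y0; move: hxy; rewrite y0 mulr0 => /eqP; rewrite eq_sym oner_eq0.
split => //; have := hmul x0 y0; rewrite hxy v1.
case: hx => [/eqP|hx]; first by rewrite (negbTE x0).
case: hy => [/eqP|hy]; first by rewrite (negbTE y0).
move=> h; apply/eqP; rewrite eq_le hx andbT.
by rewrite -(lerD2r (v y)) -h add0r.
Qed.

Lemma vge_unit_mul N x y : isunit x -> vge v N y -> vge v N (x * y).
Proof. by move=> /unit_vge hx hy; have := vge_mul hx hy; rewrite add0r. Qed.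

Lemma vopp x : v (- x) = v x.
Proof.
have [->|x0] := eqVneq x 0; first by rewrite oppr0.
by rewrite -mulN1r hmul ?oppr_eq0 ?oner_eq0 // vN1 add0r.
Qed.

Lemma unit_add a z : isunit a -> vge v 1 z -> isunit (a + z).
Proof.
move=> [a0 ha] hz.
have [->|z0] := eqVneq z 0; first by rewrite addr0.
case: hz => [/eqP|hz]; first by rewrite (negbTE z0).
have s0 : a + z != 0.
  apply/eqP => s0; have zE : z = - a by apply/eqP; rewrite -addr_eq0 addrC s0.
  by move: hz; rewrite zE vopp ha.
split=> //.
have h1 := hult a0 z0 s0.
have z0' : - z != 0 by rewrite oppr_eq0.
have h3 := hult s0 z0'; rewrite addrK vopp ha in h3; have {h3} h3 := h3 a0.
move: h1 h3; rewrite ha !ge_min => /orP[h1|h1] /orP[h3|h3]; apply/eqP; rewrite eq_le;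
  apply/andP; split => //; lia.
Qed.
End Val.

Section Abs.
Variables (R : realType) (K : fieldType) (v : K -> int) (q : nat).
Hypothesis hmul : forall {x y : K}, x != 0 -> y != 0 -> v (x * y) = v x + v y.
Hypothesis hult : forall {x y : K}, x != 0 -> y != 0 -> x + y != 0 ->
         Num.min (v x) (v y) <= v (x + y).
Hypothesis q1 : (1 < q)%N.

Let Q : R := q%:R.
Lemma Q1 : 1 < Q. Proof. by rewrite /Q ltr1n. Qed.
Lemma Q0 : 0 < Q. Proof. exact: lt_trans ltr01 Q1. Qed.

Lemma absv_vge M (x : K) : vge v M x -> absv R v q x <= Q ^ (- M).
Proof.
rewrite /absv; case: eqP => [_ _|/eqP x0]; first by rewrite exprz_ge0 // ltW // Q0.
case=> [/eqP|h]; first by rewrite (negbTE x0).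
by rewrite ler_eXz2l ?Q1 // lerN2.
Qed.

Lemma absv_ge0 (x : K) : 0 <= absv R v q x.
Proof. by rewrite /absv; case: eqP => // _; rewrite exprz_ge0 // ltW // Q0. Qed.

Lemma absv_close (x y : K) (r0 : R) M :
  absv R v q x <= r0 -> vge v M y -> Q ^ (- M) <= r0 -> absv R v q (x + y) <= r0.
Proof.
move=> hx hy hM.
have [->|y0] := eqVneq y 0; first by rewrite addr0.
have [->|x0] := eqVneq x 0; first by rewrite add0r; apply: le_trans (absv_vge hy) hM.
have [s0|s0] := eqVneq (x + y) 0.
  by rewrite s0 /absv eqxx; apply: le_trans (absv_ge0 x) hx.
have := hult x0 y0 s0; rewrite ge_min => /orP[h|h].
  apply: le_trans hx; rewrite /absv (negbTE x0) (negbTE s0).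
  by rewrite ler_eXz2l ?Q1 // lerN2.
apply: le_trans hM; apply: absv_vge; right.
case: hy => [/eqP|hy]; first by rewrite (negbTE y0).
exact: le_trans hy h.
Qed.

Lemma absv_lt1 (x : K) : absv R v q x < 1 -> vge v 0 x.
Proof.
rewrite /absv; case: eqP => [->|/eqP x0]; first by left.
move=> h; right; move: h; rewrite -(expr0z Q) ltr_eXz2l ?Q1 //.
rewrite oppr_lt0 => h; exact: ltW.
Qed.

Lemma absv_unit (x : K) : isunit v x -> absv R v q x = 1.
Proof. by case=> x0 h; rewrite /absv (negbTE x0) h oppr0 expr0z. Qed.

Lemma absv_le1 (x : K) : vge v 0 x -> absv R v q x <= 1.
Proof. by move/absv_vge; rewrite oppr0 expr0z. Qed.

Lemma norm2_unit (a c : K) : isunit v a -> vge v 0 c -> norm2 R v q (a, c) = 1.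
Proof.
move=> ha hc; rewrite /norm2 /= absv_unit //.
by apply/eqP; rewrite eq_le ge_max lexx absv_le1 // le_max lexx.
Qed.

Lemma theta_step (c0 : K * K) (r : R) a c a' c' M :
  ballS1 v q c0 r (a, c) -> isunit v a' -> vge v 0 c' ->
  vge v M (a' - a) -> vge v M (c' - c) -> Q ^ (- M) <= r ->
  ballS1 v q c0 r (a', c').
Proof.
move=> [_ hb] ha hc h1 h2 hM; split; first exact: norm2_unit.
move: hb; rewrite /norm2 /= !ge_max => /andP[b1 b2].
have -> : a' - c0.1 = (a - c0.1) + (a' - a) by ring.
have -> : c' - c0.2 = (c - c0.2) + (c' - c) by ring.
by rewrite (absv_close b1 h1 hM) (absv_close b2 h2 hM).
Qed.

Lemma D_step (d : K) (r' : R) g g' M :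
  ballK v q d r' g -> vge v M (g' - g) -> Q ^ (- M) <= r' -> ballK v q d r' g'.
Proof.
move=> hb h hM; rewrite /ballK /= in hb *.
have -> : g' - d = (g - d) + (g' - g) by ring.
exact: absv_close hb h hM.
Qed.

Lemma QexpN (M : nat) : Q ^ (- (M%:Z)) = (Q ^+ M)^-1.
Proof. by rewrite -exprnN. Qed.

Lemma exists_M0 (r : R) : 0 < r -> exists M : nat, (0 < M)%N /\ (Q ^+ M)^-1 <= r.
Proof.
move=> r0; have ri : 0 <= r^-1 by rewrite invr_ge0 ltW.
have hb := archi_boundP ri.
set B := Num.bound _ in hb.
exists B.+1; split => //.
have hq : (B.+1 < q ^ B.+1)%N by apply: ltn_expl.
have : (B%:R : R) < Q ^+ B.+1.
  rewrite /Q -natrX ltr_nat; exact: ltn_trans (ltnSn B) hq.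
move=> h; rewrite -[r]invrK lef_pV2 ?posrE ?invr_gt0 // ?exprn_gt0 ?Q0 //.
exact: ltW (lt_trans hb h).
Qed.
End Abs.

Section Core.
Variables (R : realType) (K : fieldType) (v : K -> int) (q : nat) (pi : K).
Hypothesis hmul : forall {x y : K}, x != 0 -> y != 0 -> v (x * y) = v x + v y.
Hypothesis hult : forall {x y : K}, x != 0 -> y != 0 -> x + y != 0 ->
         Num.min (v x) (v y) <= v (x + y).
Hypothesis q1 : (1 < q)%N.
Hypothesis pi0 : pi != 0.
Hypothesis vpi : v pi = 1.
Variables (c0 : K * K) (r : R) (d : K) (r' : R) (M0 k : int).
Hypothesis hM0 : 1 <= M0.
Hypothesis hk : 0 <= k.
Hypothesis hM0r : (q%:R : R) ^ (- M0) <= r.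
Hypothesis hM0r' : (q%:R : R) ^ (- M0) <= r'.
Hypothesis r'1 : r' < 1.
Hypothesis hd : vge v (- k) d.

Let vge_mul := vge_mul (@hmul).
Let vge_add := vge_add (@hult).
Let vge_sub := vge_sub (@hmul) (@hult).
Let unit_add := unit_add (@hmul) (@hult).
Let unit_inv := unit_inv (@hmul).
Let unit_mul := unit_mul (@hmul).

Lemma vge_pi n : vge v 0 (pi ^+ n).
Proof.
elim: n => [|n IH]; first by rewrite expr0; apply: vge_1.
rewrite exprS; have := vge_mul (N := 0) (M := 0) (or_intror _) IH.
by rewrite addr0; apply; rewrite vpi.
Qed.

Lemma vge_mulr0 N x y : vge v N x -> vge v 0 y -> vge v N (x * y).
Proof. by move=> hx hy; have := vge_mul hx hy; rewrite addr0. Qed.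
Lemma vge_mull0 N x y : vge v 0 x -> vge v N y -> vge v N (x * y).
Proof. by move=> hx hy; have := vge_mul hx hy; rewrite add0r. Qed.

Definition Bs n (a b c dd : K) :=
  [/\ a * dd - b * c = 1, isunit v (pi ^+ n * a), vge v 0 (pi ^+ n * c),
      ballS1 v q c0 r (pi ^+ n * a, pi ^+ n * c) & ballK v q d r' (b / a)].

Definition Ws (a b c dd : K) :=
  let M := M0 + 2 * k in
  [/\ a * dd - b * c = 1, vge v M (a - 1), vge v M b, vge v M c & vge v M (dd - 1)].

Lemma unit_neq0 x : isunit v x -> x != 0. Proof. by case. Qed.

Lemma left_s n g00 g01 g10 g11 h00 h01 h10 h11 :
  Bs n g00 g01 g10 g11 -> Ws h00 h01 h10 h11 ->
  Bs n (h00 * g00 + h01 * g10) (h00 * g01 + h01 * g11)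
       (h10 * g00 + h11 * g10) (h10 * g01 + h11 * g11).
Proof.
move=> [dG ua hc hT hD] [dH e00 e01 e10 e11].
set M := M0 + 2 * k in e00 e01 e10 e11.
have hM1 : M0 <= M by rewrite /M; lia.
set a := pi ^+ n * g00 in ua hT *; set c := pi ^+ n * g10 in hc hT *.
have a0 := unit_neq0 ua.
have g0 : g00 != 0 by move: a0; rewrite mulf_eq0 negb_or => /andP[].
have hda : pi ^+ n * (h00 * g00 + h01 * g10) - a = (h00 - 1) * a + h01 * c.
  by rewrite /a /c; ring.
have hdc : pi ^+ n * (h10 * g00 + h11 * g10) - c = h10 * a + (h11 - 1) * c.
  by rewrite /a /c; ring.
have va : vge v M (pi ^+ n * (h00 * g00 + h01 * g10) - a).
  by rewrite hda; apply: vge_add; apply: vge_mulr0 => //; apply: unit_vge.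
have vc : vge v M (pi ^+ n * (h10 * g00 + h11 * g10) - c).
  by rewrite hdc; apply: vge_add; apply: vge_mulr0 => //; apply: unit_vge.
have ua' : isunit v (pi ^+ n * (h00 * g00 + h01 * g10)).
  rewrite -[pi ^+ n * _](subrK a) addrC; apply: unit_add => //.
  by apply: vge_mono va _; lia.
have hc' : vge v 0 (pi ^+ n * (h10 * g00 + h11 * g10)).
  rewrite -(subrK c (pi ^+ n * _)); apply: vge_add => //.
  by apply: vge_mono vc _; lia.
have a'0 := unit_neq0 ua'.
have s0 : h00 * g00 + h01 * g10 != 0 by move: a'0; rewrite mulf_eq0 negb_or => /andP[].
split.
- have -> : (h00 * g00 + h01 * g10) * (h10 * g01 + h11 * g11) -
     (h00 * g01 + h01 * g11) * (h10 * g00 + h11 * g10) =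
     (h00 * h11 - h01 * h10) * (g00 * g11 - g01 * g10) by ring.
  by rewrite dH dG mulr1.
- exact: ua'.
- exact: hc'.
- apply: theta_step hT ua' hc' (vge_mono va hM1) (vge_mono vc hM1) hM0r => //.
- apply: D_step hD _ hM0r' => //.
  have -> : (h00 * g01 + h01 * g11) / (h00 * g00 + h01 * g10) - g01 / g00 =
     h01 * (g00 * g11 - g01 * g10) * (pi ^+ n * pi ^+ n) * a^-1 *
     (pi ^+ n * (h00 * g00 + h01 * g10))^-1.
    by rewrite /a; field; rewrite s0 g0 expf_neq0.
  rewrite dG mulr1; apply: vge_mulr0; last exact/unit_vge/unit_inv.
  apply: vge_mulr0; last exact/unit_vge/unit_inv.
  apply: vge_mulr0; last by apply: vge_mull0 (vge_pi n) (vge_pi n).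
  exact: vge_mono e01 hM1.
Qed.

Lemma gamma_bound b a : ballK v q d r' (b / a) -> vge v (- k) (b / a).
Proof.
move=> h; have h0 : vge v 0 (b / a - d).
  apply: (absv_lt1 (R := R) q1); exact: le_lt_trans h r'1.
have -> : b / a = d + (b / a - d) by rewrite addrC subrK.
by apply: vge_add => //; apply: vge_mono h0 _; lia.
Qed.

Lemma right_s n g00 g01 g10 g11 h00 h01 h10 h11 :
  Bs n g00 g01 g10 g11 -> Ws h00 h01 h10 h11 ->
  Bs n (g00 * h00 + g01 * h10) (g00 * h01 + g01 * h11)
       (g10 * h00 + g11 * h10) (g10 * h01 + g11 * h11).
Proof.
move=> [dG ua hc hT hD] [dH e00 e01 e10 e11].
set M := M0 + 2 * k in e00 e01 e10 e11.
have hg := gamma_bound hD.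
set gm := g01 / g00 in hD hg.
set a := pi ^+ n * g00 in ua hT *; set c := pi ^+ n * g10 in hc hT *.
have a0 := unit_neq0 ua.
have g0 : g00 != 0 by move: a0; rewrite mulf_eq0 negb_or => /andP[].
have hda : pi ^+ n * (g00 * h00 + g01 * h10) - a = a * (h00 - 1) + (a * gm) * h10.
  by rewrite /a /gm; field.
have hdc : pi ^+ n * (g10 * h00 + g11 * h10) - c =
   c * (h00 - 1) + ((pi ^+ n * pi ^+ n) * a^-1 * (g00 * g11 - g01 * g10) + gm * c) * h10.
  by rewrite /a /gm /c; field; rewrite g0 expf_neq0.
rewrite dG mulr1 in hdc.
have L1 : M0 + k <= M - k by rewrite /M; lia.
have va : vge v (M0 + k) (pi ^+ n * (g00 * h00 + g01 * h10) - a).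
  rewrite hda; apply: vge_add.
    by apply: vge_mull0; [exact: unit_vge | apply: vge_mono e00 _; lia].
  have := vge_mul (vge_mull0 (unit_vge ua) hg) e10.
  by move/vge_mono; apply; lia.
have vc : vge v (M0 + k) (pi ^+ n * (g10 * h00 + g11 * h10) - c).
  rewrite hdc; apply: vge_add.
    by apply: vge_mull0 => //; apply: vge_mono e00 _; lia.
  have h1 : vge v (- k) (pi ^+ n * pi ^+ n / a + gm * c).
    apply: vge_add; last exact: vge_mulr0.
    apply: vge_mono (_ : vge v 0 _) _; last lia.
    apply: vge_mulr0; first exact: vge_mull0 (vge_pi n) (vge_pi n).
    exact/unit_vge/unit_inv.
  have := vge_mul h1 e10.
  by move/vge_mono; apply; lia.
have ua' : isunit v (pi ^+ n * (g00 * h00 + g01 * h10)).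
  rewrite -[pi ^+ n * _](subrK a) addrC; apply: unit_add => //.
  by apply: vge_mono va _; lia.
have hc' : vge v 0 (pi ^+ n * (g10 * h00 + g11 * h10)).
  rewrite -(subrK c (pi ^+ n * _)); apply: vge_add => //.
  by apply: vge_mono vc _; lia.
have a'0 := unit_neq0 ua'.
have s0 : g00 * h00 + g01 * h10 != 0 by move: a'0; rewrite mulf_eq0 negb_or => /andP[].
split.
- have -> : (g00 * h00 + g01 * h10) * (g10 * h01 + g11 * h11) -
     (g00 * h01 + g01 * h11) * (g10 * h00 + g11 * h10) =
     (g00 * g11 - g01 * g10) * (h00 * h11 - h01 * h10) by ring.
  by rewrite dH dG mulr1.
- exact: ua'.
- exact: hc'.
- apply: theta_step hT ua' hc' (vge_mono va _) (vge_mono vc _) hM0r => //; lia.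
- apply: D_step hD _ hM0r' => //.
  have -> : (g00 * h01 + g01 * h11) / (g00 * h00 + g01 * h10) - gm =
     (h01 + gm * (h11 - 1) - gm * (h00 - 1) - gm * gm * h10) * a *
     (pi ^+ n * (g00 * h00 + g01 * h10))^-1.
    by rewrite /a /gm; field; rewrite s0 g0 expf_neq0.
  apply: vge_mulr0; last exact/unit_vge/unit_inv.
  apply: vge_mulr0; last exact: unit_vge.
  have L2 : M0 <= M - k - k by rewrite /M; lia.
  apply: vge_sub; first apply: vge_sub; first apply: vge_add.
  + by apply: vge_mono e01 _; lia.
  + by apply: vge_mono (vge_mul hg e11) _; lia.
  + by apply: vge_mono (vge_mul hg e00) _; lia.
  + by apply: vge_mono (vge_mul (vge_mul hg hg) e10) _; lia.
Qed.

Definition BsM n (G : 'M[K]_2) := Bs n (G i0 i0) (G i0 i1) (G i1 i0) (G i1 i1).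
Definition WsM (G : 'M[K]_2) := Ws (G i0 i0) (G i0 i1) (G i1 i0) (G i1 i1).
Definition adjM (G : 'M[K]_2) := mx2 (G i1 i1) (- G i0 i1) (- G i1 i0) (G i0 i0).

Lemma leftM n G H : BsM n G -> WsM H -> BsM n (H *m G).
Proof.
rewrite /BsM /WsM => hG hH; rewrite (mx2_eta H) (mx2_eta G) mx2_mul.
rewrite mx2E00 mx2E01 mx2E10 mx2E11; exact: left_s.
Qed.

Lemma rightM n G H : BsM n G -> WsM H -> BsM n (G *m H).
Proof.
rewrite /BsM /WsM => hG hH; rewrite (mx2_eta H) (mx2_eta G) mx2_mul.
rewrite mx2E00 mx2E01 mx2E10 mx2E11; exact: right_s.
Qed.

Lemma WsM_adj G : WsM G -> WsM (adjM G).
Proof.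
rewrite /WsM /adjM !(mx2E00, mx2E01, mx2E10, mx2E11).
case=> dG e00 e01 e10 e11; split => //; try exact: vge_opp (@hmul) _ _ _.
by rewrite -dG; ring.
Qed.

Lemma detE (G : 'M[K]_2) : \det G = G i0 i0 * G i1 i1 - G i0 i1 * G i1 i0.
Proof. by rewrite {1}(mx2_eta G) mx2_det. Qed.

Lemma adjM_l G : \det G = 1 -> adjM G *m G = 1%:M.
Proof.
rewrite detE /adjM mx2_one => dG; rewrite [X in _ *m X](mx2_eta G) mx2_mul.
congr mx2; rewrite -?dG; ring.
Qed.

Lemma adjM_r G : \det G = 1 -> G *m adjM G = 1%:M.
Proof.
rewrite detE /adjM mx2_one => dG; rewrite [X in X *m _](mx2_eta G) mx2_mul.
congr mx2; rewrite -?dG; ring.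
Qed.

Lemma integral_mx2 (a b c dd : K) i j :
  vge v 0 a -> vge v 0 b -> vge v 0 c -> vge v 0 dd -> vge v 0 (mx2 a b c dd i j).
Proof. by move=> *; rewrite mxE; do 2 case: ifP. Qed.

Definition Bset n := setmul (setmul (PTheta v (ballS1 v q c0 r)) (Aset pi n))
  (Uset (ballK v q d r')).

Lemma B_to_BsM n b : Bset n b -> BsM n (val b).
Proof.
move=> [y [u [[p [a [[Ip p01 Tp] Ea Ey]] [gm Dgm Eu] Eb]]]].
have dp : \det (val p) = 1 := eqP (proj2_sig p).
have db : \det (val b) = 1 := eqP (proj2_sig b).
move: Eb; rewrite Eu Ey Ea (mx2_eta (val p)) p01 !mx2_mul.
rewrite !mulr0 !mul0r !addr0 !add0r !mulr1 addr0 => Eb.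
rewrite detE p01 mul0r subr0 in dp.
set p00 := val p i0 i0 in dp Tp Eb *; set p10 := val p i1 i0 in Tp Eb *.
set p11 := val p i1 i1 in dp Eb *.
have up : isunit v p00 := unit_of_prod (@hmul) (Ip i0 i0) (Ip i1 i1) dp.
have p0 := unit_neq0 up.
have pn0 : pi ^+ n != 0 by rewrite expf_neq0.
rewrite /BsM Eb !(mx2E00, mx2E01, mx2E10, mx2E11).
rewrite /Bs.
have -> : pi ^+ n * (p00 / pi ^+ n) = p00 by field.
have -> : pi ^+ n * (p10 / pi ^+ n) = p10 by field.
have -> : p00 / pi ^+ n * gm / (p00 / pi ^+ n) = gm by field; rewrite ?p0 ?pn0.
split => //; last exact: Ip.
by rewrite -dp; field.
Qed.

Definition mkSL (M : 'M[K]_2) (h : \det M == 1) : SL2 K :=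
  exist (fun M => \det M == 1) M h.

Lemma BsM_to_B n (g : SL2 K) : BsM n (val g) -> Bset n g.
Proof.
rewrite /BsM; set g00 := val g i0 i0; set g01 := val g i0 i1;
  set g10 := val g i1 i0; set g11 := val g i1 i1.
case=> dG ua hc hT hD.
set a := pi ^+ n * g00 in ua hc hT; set c := pi ^+ n * g10 in hc hT.
have a0 := unit_neq0 ua.
have g0 : g00 != 0 by move: a0; rewrite mulf_eq0 negb_or => /andP[].
have pn0 : pi ^+ n != 0 by rewrite expf_neq0.
have dP : \det (mx2 a 0 c a^-1) == 1 by rewrite mx2_det mul0r subr0 mulfV.
have dA : \det (mx2 (pi ^- n) 0 0 (pi ^+ n)) == 1 by rewrite mx2_det mul0r subr0 mulVf.
have dPA : \det (mx2 a 0 c a^-1 *m mx2 (pi ^- n) 0 0 (pi ^+ n)) == 1.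
  by rewrite det_mulmx (eqP dP) (eqP dA) mulr1.
have dU : \det (mx2 1 (g01 / g00) 0 1) == 1 by rewrite mx2_det mulr0 subr0 mulr1.
exists (mkSL dPA), (mkSL dU); split => /=.
- exists (mkSL dP), (mkSL dA); split => //=.
  split => /=; rewrite ?mx2E01 ?mx2E00 ?mx2E10 //.
  move=> i j; apply: integral_mx2 => //; try exact: vge0; try exact: unit_vge.
  exact/unit_vge/unit_inv.
- by exists (g01 / g00).
- rewrite (mx2_eta (val g)) !mx2_mul -/g00 -/g01 -/g10 -/g11; congr mx2.
  + by rewrite /a; field; rewrite ?g0 ?pn0.
  + by rewrite /a; field; rewrite ?g0 ?pn0.
  + by rewrite /c /a; field; rewrite ?g0 ?pn0.
  + have -> : g11 = (g00 * g11 - g01 * g10 + g01 * g10) / g00 by field.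
    by rewrite dG /a /c; field; rewrite ?g0 ?pn0.
Qed.

Lemma core_eq n (V : set (SL2 K)) : (forall g, V g -> WsM (val g)) -> V (SL2_one K) ->
  setmul (setmul V (Bset n)) V =
  [set x | forall g h, V g -> V h -> exists2 b, Bset n b & val x = val g *m val b *m val h].
Proof.
move=> VW V1; apply/seteqP; split.
- move=> x [y [h1 [[g1 [b [Vg1 Bb Ey]] Vh1 Ex]]]] g h Vg Vh.
  have hx : BsM n (val x).
    rewrite Ex Ey -mulmxA; apply: leftM; last exact: VW.
    by apply: rightM; [exact: B_to_BsM | exact: VW].
  set X := adjM (val g) *m val x *m adjM (val h).
  have hX : BsM n X by apply: rightM; [apply: leftM => //|]; apply/WsM_adj/VW.
  have dX : \det X == 1 by apply/eqP; case: hX => + _ _ _ _; rewrite detE.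
  exists (mkSL dX); first exact: BsM_to_B.
  have dg : \det (val g) = 1 := eqP (proj2_sig g).
  have dh : \det (val h) = 1 := eqP (proj2_sig h).
  rewrite /= /X !mulmxA (adjM_r dg) mul1mx -mulmxA (adjM_l dh) mulmx1 //.
- move=> x H; have [b Bb E] := H _ _ V1 V1.
  exists b, (SL2_one K); split => //.
    by exists (SL2_one K), b; split => //=; rewrite mul1mx.
  by move: E => /= ->; rewrite mul1mx !mulmx1.
Qed.
End Core.

Lemma int_aux (a b : nat) : (a%:Z + 2 * b%:Z) = (a + 2 * b)%N :> int.
Proof. lia. Qed.

Lemma q_gt1 (K : fieldType) (v : K -> int) (q : nat) (pi : K) :
  is_local_function_field v q pi -> (1 < q)%N.
Proof.
case=> _ [hmul hult _ [s [hs us sO sD sC]] _].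
have [a0 a0s h0] := sC 0 (vge0 v 0).
have [a1 a1s h1] := sC 1 (vge_1 hmul).
have ne : a0 != a1.
  apply/eqP => e; subst a1.
  have := vge_sub hmul hult h1 h0.
  have -> : 1 - a0 - (0 - a0) = 1 :> K by ring.
  case=> [/eqP|]; first by rewrite oner_eq0.
  by rewrite (v1 hmul).
rewrite -hs; have : uniq [:: a0; a1] by rewrite /= inE ne.
move/uniq_leq_size => /(_ s) /=; apply.
by move=> x; rewrite !inE => /orP[/eqP->|/eqP->].
Qed.

Theorem proposition4p2 (R : realType) (K : fieldType) (v : K -> int) (q : nat)
    (pi : K) (HK : is_local_function_field v q pi)
    (mu : {measure set (GBorel R v q) -> \bar R})
    (Hmu : is_haar_measure mu)
    (c : K * K) (r : R) (d : K) (r' : R) :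
  norm2 R v q c = 1 -> 0 < r < 1 -> 0 < r' < 1 ->
  exists2 eps0 : R, 0 < eps0 &
    exists n0 : nat, forall eps : R, 0 < eps < eps0 ->
      forall n : nat, (n0 <= n)%N ->
      let B := setmul (setmul (PTheta v (ballS1 v q c r)) (Aset pi n))
                      (Uset (ballK v q d r')) in
      (mu (plus_eps v q eps B) <= mu (minus_eps v q eps B))%E.
Proof.
move=> _ /andP[r0 r1] /andP[r'0 r'1].
have q1 := q_gt1 HK.
case: HK => _ [hmul hult [pi0 vpi] _ _].
set Q : R := q%:R.
have Q1 : 1 < Q by rewrite /Q ltr1n.
have Q0 : 0 < Q by apply: lt_trans ltr01 Q1.
have mr : 0 < Num.min r r' by rewrite lt_min r0 r'0.
have [Mn [Mn0 hMn]] := exists_M0 q1 mr.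
have hM0r : Q ^ (- (Mn%:Z)) <= r.
  by rewrite QexpN //; apply: le_trans hMn _; rewrite ge_min lexx.
have hM0r' : Q ^ (- (Mn%:Z)) <= r'.
  by rewrite QexpN //; apply: le_trans hMn _; rewrite ge_min lexx orbT.
set kn := absz (v d).
have hd : vge v (- (kn%:Z)) d.
  have [->|d0] := eqVneq d 0; first by left.
  by right; rewrite /kn abszE lerNl -normrN; exact: ler_norm.
set Mt := (Mn + 2 * kn)%N.
have Mt0 : (0 < Mt)%N by rewrite /Mt addn_gt0 Mn0.
exists ((Q ^+ Mt)^-1); first by rewrite invr_gt0 exprn_gt0.
exists 0%N; move=> eps /andP[e0 ee] n _; cbv zeta.
set B := setmul (setmul _ _) _.
suff -> : plus_eps v q eps B = minus_eps v q eps B by [].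
have hM1 : (1 : int) <= Mn%:Z by rewrite lez_nat.
have hk0 : (0 : int) <= kn%:Z by [].
have := @core_eq R K v q pi hmul hult q1 pi0 vpi c r d r' (Mn%:Z) (kn%:Z) hM1 hk0 hM0r hM0r' r'1 hd n
  (Veps v q eps).
move=> H.
have HV : forall g : SL2 K, Veps v q eps g -> WsM v Mn kn (val g).
  move=> g [Ig Hc].
  have e1 : eps <= Q^-1.
    apply: le_trans (ltW ee) _.
    rewrite lef_pV2 ?posrE ?exprn_gt0 //; apply: ler_eXnr => //; exact: ltW.
  have hN : (Mt%:Z) <= Neps q eps.
    rewrite /Neps floor_ge_int.
    have -> : ((Mt%:Z)%:~R : R) = Mt%:R by [].
    have lQ : 0 < ln Q by apply: ln_gt0.
    have hl : ln eps <= ln ((Q ^+ Mt)^-1).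
      by rewrite ler_ln ?posrE ?invr_gt0 ?exprn_gt0 // ltW.
    rewrite lnV ?posrE ?exprn_gt0 // lnXn // -mulr_natr in hl.
    rewrite -mulNr ler_pdivlMr; last exact: lQ.
    by rewrite mulrC lerNr; exact: hl.
  have W i j : vge v (Mn%:Z + 2 * kn%:Z) (val g i j - (1%:M : 'M[K]_2) i j).
    by apply: vge_mono (Hc e1 i j) (le_trans _ hN); rewrite /Mt int_aux.
  have := W i0 i0; have := W i0 i1; have := W i1 i0; have := W i1 i1.
  rewrite mx2_one !(mx2E00, mx2E01, mx2E10, mx2E11) !subr0 => w11 w10 w01 w00.
  split => //; rewrite -detE; exact: (eqP (proj2_sig g)).
have V1 : Veps v q eps (SL2_one K).
  split.
    move=> i j /=; rewrite mx2_one; apply: integral_mx2; try exact: vge0.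
      exact: vge_1.
    exact: vge_1.
  by move=> _ i j /=; rewrite subrr; exact: vge0.
exact: (H HV V1).
Qed.
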